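(* Let $q\ge K$. The Specialized Augmented Code protocol is a JPLT-II protocol: it satisfies the recoverability and joint privacy conditions under Model II, and its rate is $L/(K-D+L)$.
   Context: Setup. Let $q$ be a prime power, $N\ge 1$ an integer, $B=N\log_2 q$, and $1\le L\le D\le K$ integers. Let $\mathbb{W}$ be the set of all $D$-element subsets of $[K]=\{1,\dots,K\}$. Let $\mathbb{V}_I$ be the set of $L\times D$ matrices over $\mathbb{F}_q$ that are MDS (every $L\times L$ submatrix is invertible), and $\mathbb{V}_{II}$ the set of $L\times D$ matrices over $\mathbb{F}_q$ of rank $L$. A server stores messages $X_1,\dots,X_K\in\mathbb{F}_q^N$ (row vectors), which are independent and uniformly distributed; $X$ denotes the $K\times N$ matrix with rows $X_1,\dots,X_K$, and for $S\subseteq[K]$, $X_S$ is the submatrix of rows indexed by $S$ (in increasing order). For $W\in\mathbb{W}$ and an $L\times D$ matrix $V$, the demand is $Z^{[W,V]}=VX_W=UX$, where the global coefficient matrix $U$ is the $L\times K$ matrix whose columns indexed by $W$ (in increasing order) are the columns of $V$ and whose other columns are zero. The demand support $W$ is uniform on $\mathbb{W}$; the coefficient matrix $V$ is uniform on $\mathbb{V}_I$ (Model I) or on $\mathbb{V}_{II}$ (Model II); $W,V,X$ are mutually independent. The server knows $K,D,L$ and these distributions but not the realizations of $W,V$. Protocol. The user draws private randomness $R$ independent of $(W,V,X)$ and sends a query $Q=Q^{[W,V]}$ that is a function of $(W,V,R)$; the server returns an answer $A=A^{[W,V]}$ that is a deterministic function of $(Q,X)$. Recoverability: $H(Z^{[W,V]}\mid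 A,Q,W,V)=0$. Joint privacy: for every realization $\mathrm{Q}$ of the query with positive probability and every $\tilde W\in\mathbb{W}$, $\Pr(W=\tilde W\mid Q=\mathrm{Q})=1/\binom{K}{D}$. A JPLT-I (resp. JPLT-II) protocol is a protocol satisfying recoverability and joint privacy under Model I (resp. Model II). The rate of a protocol is $H(Z^{[W,V]})/H(A)=LB/H(A)$. Specialized Augmented Code protocol (Model II). Fix, independently of $(W,V)$, a $(K-D)\times K$ MDS matrix $M$ over $\mathbb{F}_q$ (every $(K-D)\times(K-D)$ submatrix invertible; e.g., a generator matrix of a $[K,K-D]$ generalized Reed–Solomon code, which exists for $q\ge K$). Given $W\in\mathbb{W}$ and $V\in\mathbb{V}_{II}$, the user forms the global coefficient matrix $U$, the $(K-D+L)\times K$ matrix $\hat G=\begin{bmatrix}U\\ M\end{bmatrix}$, draws a uniformly random invertible $(K-D+L)\times(K-D+L)$ matrix $R$ over $\mathbb{F}_q$ (independent of everything else), and sends $G=R\hat G$ as the query. The server returns $Y=GX$. The user computes $\tilde Y=R^{-1}Y$ and reads the demand $VX_W$ as the first $L$ rows of $\tilde Y$. *)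

(* Defs.v *)
From HB Require Import structures.
From mathcomp Require Import all_boot all_order all_algebra.
From mathcomp Require Import reals exp.

Set Implicit Arguments.
Unset Strict Implicit.
Unset Printing Implicit Defensive.

Import Order.TTheory GRing.Theory Num.Theory.
Local Open Scope ring_scope.

Definition Pr (rT : realType) (Omega : finType) (valid : pred Omega)
  (E : pred Omega) : rT :=
  #|[set w | valid w && E w]|%:R / #|[set w | valid w]|%:R.

Definition log2 (rT : realType) (x : rT) : rT := ln x / ln 2.

Definition entropy (rT : realType) (Omega : finType) (valid : pred Omega)
  (T : finType) (Y : Omega -> T) : rT :=
  \sum_(y : T)
    (let p := Pr rT valid (fun w => Y w == y) in
     if 0 < p then - (p * log2 p) else 0).

Definition cond_entropy (rT : realType) (Omega : finType) (valid : pred Omega)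
  (T S : finType) (Z : Omega -> T) (Y : Omega -> S) : rT :=
  \sum_(y : S) \sum_(z : T)
    (let pzy := Pr rT valid (fun w => (Z w == z) && (Y w == y)) in
     let py := Pr rT valid (fun w => Y w == y) in
     if 0 < pzy then pzy * log2 (py / pzy) else 0).

Definition is_MDS (F : fieldType) (m n : nat) (A : 'M[F]_(m, n)) : Prop :=
  forall f : 'I_m -> 'I_n,
    (forall i j : 'I_m, (i < j)%N -> (f i < f j)%N) ->
    colsub f A \in unitmx.

Definition ord_opt (D k : nat) : option 'I_D := insub k.

(* Global coefficient matrix U (L x K): column j in W is the column of V *)
(* with index = position of j in W listed increasingly; other columns 0. *)
Definition global_coef (F : fieldType) (K D L : nat)
  (W : {set 'I_K}) (V : 'M[F]_(L, D)) : 'M[F]_(L, K) :=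
  \matrix_(i < L, j < K)
    if j \in W then
      match ord_opt D #|[set k in W | (k < j)%N]| with
      | Some k => V i k
      | None => 0
      end
    else 0.

(* uniform on the support = independent uniform W, V, R, X.            *)

Definition sac_space (F : finFieldType) (K D L N : nat) : finType :=
  ({set 'I_K} * 'M[F]_(L, D) * 'M[F]_(L + (K - D)) * 'M[F]_(K, N))%type.

Definition sac_valid (F : finFieldType) (K D L N : nat)
  (w : sac_space F K D L N) : bool :=
  let '(W, V, Rm, X) := w in
  [&& #|W| == D, \rank V == L & Rm \in unitmx].

Definition sac_W (F : finFieldType) (K D L N : nat)
  (w : sac_space F K D L N) : {set 'I_K} :=
  let '(W, V, Rm, X) := w in W.

Definition sac_V (F : finFieldType) (K D L N : nat)
  (w : sac_space F K D L N) : 'M[F]_(L, D) :=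
  let '(W, V, Rm, X) := w in V.

Definition sac_demand (F : finFieldType) (K D L N : nat)
  (w : sac_space F K D L N) : 'M[F]_(L, N) :=
  let '(W, V, Rm, X) := w in global_coef W V *m X.

Definition sac_query (F : finFieldType) (K D L N : nat) (M : 'M[F]_(K - D, K))
  (w : sac_space F K D L N) : 'M[F]_(L + (K - D), K) :=
  let '(W, V, Rm, X) := w in Rm *m col_mx (global_coef W V) M.

Definition sac_answer (F : finFieldType) (K D L N : nat) (M : 'M[F]_(K - D, K))
  (w : sac_space F K D L N) : 'M[F]_(L + (K - D), N) :=
  let '(W, V, Rm, X) := w in (Rm *m col_mx (global_coef W V) M) *m X.

(* Main.v *)
Require Import Defs.
From HB Require Import structures.
From mathcomp Require Import all_boot all_order all_algebra.
From mathcomp Require Import reals exp.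
From mathcomp Require Import zify ring.
Import Order.TTheory GRing.Theory Num.Theory.
Set Implicit Arguments. Unset Strict Implicit. Unset Printing Implicit Defensive.

Definition pos (K : nat) (W : {set 'I_K}) (j : 'I_K) : nat :=
  #|[set k in W | (k < j)%N]|.

Lemma pos_mono K (W : {set 'I_K}) (j j' : 'I_K) : (j <= j')%N -> (pos W j <= pos W j')%N.
Proof.
move=> le; apply: subset_leq_card; apply/subsetP=> k; rewrite !inE => /andP[->] /=.
by move=> h; exact: leq_trans h le.
Qed.

Lemma pos_strict K (W : {set 'I_K}) (j j' : 'I_K) : j \in W -> (j < j')%N -> (pos W j < pos W j')%N.
Proof.
move=> jW lt; rewrite /pos; apply: proper_card; apply/properP; split.
  apply/subsetP=> k; rewrite !inE => /andP[->] /= h; exact: ltn_trans h lt.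
by exists j; rewrite !inE ?jW ?lt ?ltnn.
Qed.

Lemma pos_lt K (W : {set 'I_K}) (j : 'I_K) : j \in W -> (pos W j < #|W|)%N.
Proof.
move=> jW; rewrite /pos; apply: proper_card; apply/properP; split.
  by apply/subsetP=> k; rewrite !inE => /andP[->].
by exists j; rewrite // !inE ltnn andbF.
Qed.

Lemma pos_inj K (W : {set 'I_K}) : {in W &, injective (pos W)}.
Proof.
move=> j j' jW j'W e; case: (ltngtP j j') => h; last exact: val_inj.
  by move: (pos_strict jW h); rewrite e ltnn.
by move: (pos_strict j'W h); rewrite e ltnn.
Qed.

Lemma pos_surj K (W : {set 'I_K}) (i : nat) : (i < #|W|)%N -> exists2 j, j \in W & pos W j = i.
Proof.
move=> lt.
have U : uniq [seq pos W j | j <- enum W].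
  rewrite map_inj_in_uniq ?enum_uniq // => x y; rewrite !mem_enum; exact: pos_inj.
have S : {subset [seq pos W j | j <- enum W] <= iota 0 #|W|}.
  move=> x /mapP[j]; rewrite mem_enum => jW ->; rewrite mem_iota add0n pos_lt //.
have [_ E] := uniq_min_size U S ltac:(by rewrite size_iota size_map -cardE).
have : i \in iota 0 #|W| by rewrite mem_iota.
by rewrite -E => /mapP[j]; rewrite mem_enum => jW ->; exists j.
Qed.

Lemma enum_exists K (W : {set 'I_K}) n : #|W| = n ->
  exists f : 'I_n -> 'I_K, forall i, f i \in W /\ pos W (f i) = i.
Proof.
move=> cW.
have H : forall i : 'I_n, exists j : 'I_K, j \in W /\ pos W j = i.
  move=> i; have [j jW e] := @pos_surj K W i ltac:(by rewrite cW).
  by exists j.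
have [f Hf] := fin_all_exists H. by exists f.
Qed.
Local Open Scope ring_scope.
Section Mats.
Variable F : fieldType.

Definition PW (K D : nat) (W : {set 'I_K}) : 'M[F]_(D, K) :=
  \matrix_(k < D, j < K) ((j \in W) && (pos W j == k))%:R.

Lemma gc_PW K D L (W : {set 'I_K}) (V : 'M[F]_(L, D)) :
  global_coef W V = V *m PW D W.
Proof.
apply/matrixP => i j; rewrite !mxE.
under eq_bigr => k _ do rewrite mxE.
case jW: (j \in W) => /=; last by rewrite big1 // => k _; rewrite mulr0.
rewrite /ord_opt -/(pos W j); case: insubP => [k _ vk | nk].
  rewrite (bigD1 k) //= vk eqxx mulr1 big1 ?addr0 // => k' nk'.
  by rewrite -vk (inj_eq val_inj) eq_sym (negbTE nk') mulr0.
rewrite big1 // => k' _; case: eqP => e; last by rewrite mulr0.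
by move: nk; rewrite e ltn_ord.
Qed.

Lemma PW_tr K D (W : {set 'I_K}) : #|W| = D -> PW D W *m (PW D W)^T = 1%:M.
Proof.
move=> cW; have [f Hf] := enum_exists cW.
apply/matrixP => k k'; rewrite !mxE.
under eq_bigr => j _ do rewrite !mxE.
rewrite (bigD1 (f k)) //= big1 ?addr0.
  have [fW pf] := Hf k; rewrite fW pf eqxx /= mul1r.
  by rewrite (inj_eq val_inj).
move=> j nj; case jW: (j \in W) => //=; last by rewrite mul0r.
case: eqP => e; last by rewrite mul0r.
have [fW pf] := Hf k; case/eqP: nj; apply: (pos_inj jW fW); by rewrite pf e.
Qed.

Lemma PW_free K D (W : {set 'I_K}) : #|W| = D -> row_free (PW D W).
Proof. by move=> cW; apply/row_freeP; exists (PW D W)^T; exact: PW_tr. Qed.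

Lemma Qs_exists K D (W : {set 'I_K}) (M : 'M[F]_(K - D, K)) :
  #|W| = D -> is_MDS M ->
  exists Qs : 'M[F]_(K, K - D), PW D W *m Qs = 0 /\ M *m Qs \in unitmx.
Proof.
move=> cW mds.
have cC : #|~: W| = (K - D)%N by rewrite cardsCs setCK card_ord cW.
have [g Hg] := enum_exists cC.
exists (\matrix_(j, i) (j == g i)%:R); split.
  apply/matrixP => k i; rewrite !mxE.
  rewrite (bigD1 (g i)) //= big1 ?addr0.
    have [gW _] := Hg i; rewrite !mxE; move: gW; rewrite inE => /negbTE -> /=.
    by rewrite mul0r.
  by move=> j nj; rewrite !mxE (negbTE nj) mulr0.
have -> : M *m \matrix_(j, i) (j == g i)%:R = colsub g M.
  apply/matrixP => a i; rewrite !mxE (bigD1 (g i)) //= big1 ?addr0.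
    by rewrite mxE eqxx mulr1.
  by move=> j nj; rewrite mxE (negbTE nj) mulr0.
apply: mds => i i' lt; rewrite ltnNge; apply/negP => le.
have [gW pg] := Hg i; have [gW' pg'] := Hg i'.
have := pos_mono (~: W) le; rewrite pg pg' leqNgt lt //.
Qed.
End Mats.
Section Lin.
Variable F : fieldType.
Variables (K D L : nat) (M : 'M[F]_(K - D, K)).

Definition Ghat (W : {set 'I_K}) (V : 'M[F]_(L, D)) : 'M[F]_(L + (K - D), K) :=
  col_mx (global_coef W V) M.

Lemma cap0 (W : {set 'I_K}) (Qs : 'M[F]_(K, K - D)) m (b : 'M[F]_(m, K - D)) (E : 'M[F]_(m, D)) :
  PW F D W *m Qs = 0 -> M *m Qs \in unitmx -> b *m M = E *m PW F D W -> b = 0.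
Proof.
move=> PQ MQ e.
have : b *m (M *m Qs) = 0 by rewrite mulmxA e -mulmxA PQ mulmx0.
by move=> h; rewrite -(mulmxK MQ b) h mul0mx.
Qed.

Lemma Ghat_free (W : {set 'I_K}) (V : 'M[F]_(L, D)) :
  #|W| = D -> is_MDS M -> \rank V = L -> row_free (Ghat W V).
Proof.
move=> cW mds rV.
have [Qs [PQ MQ]] := Qs_exists cW mds.
have /row_freeP [Vr VVr] : row_free V by rewrite /row_free rV.
set Pm := PW F D W.
have PP := PW_tr F cW.
set Ni := invmx (M *m Qs).
set B2 := Qs *m Ni.
set B1 := Pm^T *m Vr - B2 *m (M *m (Pm^T *m Vr)).
apply/row_freeP; exists (row_mx B1 B2).
rewrite /Ghat gc_PW mul_col_row.
have UB2 : V *m Pm *m B2 = 0 by rewrite /B2 -!mulmxA (mulmxA Pm) PQ mul0mx mulmx0.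
have MB2 : M *m B2 = 1%:M by rewrite /B2 mulmxA mulmxV.
have UB1 : V *m Pm *m B1 = 1%:M.
  by rewrite /B1 mulmxBr (mulmxA (V *m Pm) B2) UB2 mul0mx subr0 -!mulmxA (mulmxA Pm) PP mul1mx.
have MB1 : M *m B1 = 0.
  by rewrite /B1 mulmxBr (mulmxA M B2) MB2 mul1mx subrr.
by rewrite UB1 UB2 MB1 MB2 -scalar_mx_block.
Qed.

Lemma U_free (W : {set 'I_K}) (V : 'M[F]_(L, D)) :
  #|W| = D -> \rank V = L -> row_free (global_coef W V).
Proof.
by move=> cW rV; rewrite /row_free gc_PW mxrankMfree ?rV ?PW_free.
Qed.

Lemma Ghat_rank (W : {set 'I_K}) (V : 'M[F]_(L, D)) :
  #|W| = D -> is_MDS M -> \rank V = L -> \rank (Ghat W V) = (L + (K - D))%N.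
Proof. by move=> cW mds rV; apply/eqP; apply: Ghat_free. Qed.

Lemma complete (W : {set 'I_K}) (V : 'M[F]_(L, D)) (G0 : 'M[F]_(L + (K - D), K)) :
  #|W| = D -> is_MDS M -> \rank V = L ->
  (global_coef W V <= G0)%MS -> (M <= G0)%MS -> \rank G0 = (L + (K - D))%N ->
  (G0 *m pinvmx (Ghat W V)) \in unitmx /\ G0 *m pinvmx (Ghat W V) *m Ghat W V = G0.
Proof.
move=> cW mds rV UG MG rG.
have sub : (Ghat W V <= G0)%MS by rewrite /Ghat col_mx_sub UG MG.
have : (G0 <= Ghat W V)%MS.
  by rewrite -(mxrank_leqif_sup sub).2 rG Ghat_rank.
move=> /mulmxKpV e; split => //.
rewrite -row_free_unit /row_free eqn_leq rank_leq_row /=.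
by rewrite -{1}rG -{1}e mxrankM_maxl.
Qed.

Lemma G0_facts (W1 : {set 'I_K}) (V1 : 'M[F]_(L, D)) R1 (G0 : 'M[F]_(L + (K - D), K)) :
  #|W1| = D -> is_MDS M -> \rank V1 = L -> R1 \in unitmx -> R1 *m Ghat W1 V1 = G0 ->
  (G0 :=: Ghat W1 V1)%MS.
Proof.
move=> cW mds rV R1u <-; apply: eqmxMfull; by rewrite row_full_unit.
Qed.

Lemma exists_sol (W1 : {set 'I_K}) (V1 : 'M[F]_(L, D)) R1 (G0 : 'M[F]_(L + (K - D), K))
  (W : {set 'I_K}) :
  (D <= K)%N -> #|W1| = D -> is_MDS M -> \rank V1 = L -> R1 \in unitmx -> R1 *m Ghat W1 V1 = G0 ->
  #|W| = D ->
  exists V R, [/\ \rank V = L, R \in unitmx & R *m Ghat W V = G0].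
Proof.
move=> DK cW1 mds rV1 R1u e cW.
have GE := G0_facts cW1 mds rV1 R1u e.
have rG : \rank G0 = (L + (K - D))%N by rewrite GE Ghat_rank.
have MG : (M <= G0)%MS.
  by rewrite GE; have := submx_refl (Ghat W1 V1); rewrite {2}/Ghat col_mx_sub => /andP[].
set Pm := PW F D W.
have rP : \rank Pm = D by apply/eqP; apply: PW_free.
set T := (G0 :&: Pm)%MS.
have rT : (L <= \rank T)%N.
  have := mxrank_sum_cap G0 Pm; rewrite rG rP => h.
  have := rank_leq_col (G0 + Pm)%MS.
  have : (K - D + D = K)%N by rewrite subnK.
  rewrite /T; move=> ? ?; lia.
set Y := (pid_mx L : 'M_(L, \rank T)) *m row_base T.
have rY : \rank Y = L by rewrite /Y mxrankMfree ?row_base_free // rank_pid_mx.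
have YT : (Y <= T)%MS by rewrite /Y (submx_trans (submxMl _ _)) // eq_row_base.
have YP : (Y <= Pm)%MS by apply: submx_trans YT (capmxSr _ _).
have YG : (Y <= G0)%MS by apply: submx_trans YT (capmxSl _ _).
set V := Y *m pinvmx Pm.
have VP : V *m Pm = Y by apply: mulmxKpV.
have rV : \rank V = L by have := rY; rewrite -VP mxrankMfree // PW_free.
have UG : (global_coef W V <= G0)%MS by rewrite gc_PW -/Pm VP.
have [Ru RG] := complete cW mds rV UG MG rG.
by exists V, (G0 *m pinvmx (Ghat W V)).
Qed.

Lemma contain (W : {set 'I_K}) (Vb V : 'M[F]_(L, D)) Rb R (G0 : 'M[F]_(L + (K - D), K)) :
  #|W| = D -> is_MDS M -> \rank Vb = L -> Rb \in unitmx -> Rb *m Ghat W Vb = G0 ->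
  \rank V = L -> R \in unitmx -> R *m Ghat W V = G0 -> (V <= Vb)%MS.
Proof.
move=> cW mds rVb Rbu eb rV Ru e.
have GEb := G0_facts cW mds rVb Rbu eb.
have GE := G0_facts cW mds rV Ru e.
have [Qs [PQ MQ]] := Qs_exists cW mds.
have UG : (global_coef W V <= Ghat W Vb)%MS.
  rewrite -GEb GE; have := submx_refl (Ghat W V); rewrite {2}/Ghat col_mx_sub.
  by case/andP.
case/submxP: UG => C eC.
move: eC; rewrite /Ghat -(hsubmxK C) mul_row_col !gc_PW => eC.
have e2 : rsubmx C *m M = (V - lsubmx C *m Vb) *m PW F D W.
  by rewrite mulmxBl eC -mulmxA addrC addKr.
have C20 := cap0 PQ MQ e2.
move: eC; rewrite C20 mul0mx addr0 mulmxA => /(row_free_inj (PW_free F cW)) ->.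
exact: submxMl.
Qed.
End Lin.
Section Prob.
Variable rT : realType.

Lemma card_part (Om J : finType) (P : pred Om) (p : Om -> J) (Q : pred J) :
  (forall w, P w -> Q (p w)) ->
  #|[set w | P w]| = (\sum_(j | Q j) #|[set w | P w && (p w == j)]|)%N.
Proof.
move=> PQ; rewrite -sum1_card.
rewrite (eq_bigl P); last by move=> w; rewrite inE.
rewrite (partition_big p Q) //; apply: eq_bigr => j _.
rewrite -sum1_card; apply: eq_bigl => w; by rewrite inE.
Qed.

Lemma log2_1 : log2 (1 : rT) = 0.
Proof. by rewrite /log2 ln1 mul0r. Qed.

Lemma cond_entropy0 (Om T S : finType) (valid : pred Om) (Z : Om -> T) (Y : Om -> S) :
  (forall w1 w2, valid w1 -> valid w2 -> Y w1 = Y w2 -> Z w1 = Z w2) ->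
  cond_entropy rT valid Z Y = 0.
Proof.
move=> H; rewrite /cond_entropy big1 // => y _; rewrite big1 // => z _ /=.
case: ifP => // pos.
suff e : Pr rT valid (fun w => Y w == y) = Pr rT valid (fun w => (Z w == z) && (Y w == y)).
  by rewrite e divff ?log2_1 ?mulr0 // gt_eqF.
have [w0 w0in] : exists w0, w0 \in [set w | valid w && ((Z w == z) && (Y w == y))].
  apply/set0Pn; apply: contraTneq pos => e.
  by rewrite /Pr e cards0 mul0r ltxx.
rewrite /Pr; congr (_%:R / _); apply: eq_card => w; rewrite !inE.
move: w0in; rewrite inE => /and3P[v0 /eqP z0 /eqP y0].
case vw: (valid w) => //=; case: (Y w =P y) => [yw|_]; last by rewrite !andbF.
by rewrite !andbT (H w w0) // ?z0 ?eqxx // yw y0.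
Qed.

Lemma entropy_unif (Om T : finType) (valid : pred Om) (Y : Om -> T) :
  (0 < #|[set w | valid w]|)%N ->
  (forall y y', (#|[set w | valid w && (Y w == y)]| <= #|[set w | valid w && (Y w == y')]|)%N) ->
  entropy rT valid Y = log2 (#|T|%:R).
Proof.
move=> n0 H.
have [w0 _] : exists w0, w0 \in [set w | valid w] by apply/set0Pn; rewrite -card_gt0.
set c := #|[set w | valid w && (Y w == Y w0)]|.
have Hc : forall y, #|[set w | valid w && (Y w == y)]| = c.
  by move=> y; apply/eqP; rewrite eqn_leq !H.
have tot : #|[set w | valid w]| = (#|T| * c)%N.
  rewrite (card_part (p := Y) (Q := predT)) //.
  rewrite (eq_bigr (fun _ => c)); last by move=> y _; rewrite Hc.
  by rewrite sum_nat_const.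
have Tpos : (0 < #|T|)%N by apply/card_gt0P; exists (Y w0).
have cpos : (0 < c)%N by move: n0; rewrite tot muln_gt0 => /andP[].
have pr : forall y, Pr rT valid (fun w => Y w == y) = (#|T|%:R)^-1.
  move=> y; rewrite /Pr Hc tot natrM invfM mulrCA divff ?mulr1 //.
  by rewrite pnatr_eq0 -lt0n.
rewrite /entropy (eq_bigr (fun _ => - ((#|T|%:R)^-1 * log2 ((#|T|%:R)^-1 : rT)))); last first.
  by move=> y _ /=; rewrite pr invr_gt0 ltr0n Tpos.
rewrite sumr_const.
rewrite /log2 lnV ?posrE ?ltr0n //.
have tn0 : (#|T|%:R : rT) != 0 by rewrite pnatr_eq0 -lt0n.
rewrite ?mul1r mulNr mulrN opprK -mulrnAl -mulr_natr.
change (#|xpredT|%:R : rT) with (#|T|%:R : rT).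
by rewrite mulVf ?mul1r.
Qed.
End Prob.
Section Sac.
Variables (F : finFieldType) (K D L N : nat) (M : 'M[F]_(K - D, K)).
Local Notation Om := (sac_space F K D L N).

Lemma shift_le (m : nat)
  (A : {set 'I_K} -> 'M[F]_(L, D) -> 'M[F]_(L + (K - D)) -> 'M[F]_(m, K)) :
  (forall (w : Om), @sac_valid F K D L N w ->
     let '(W, V, R, X) := w in row_free (A W V R)) ->
  forall y y', (#|[set w : Om | @sac_valid F K D L N w &&
                   ((let '(W, V, R, X) := w in A W V R *m X) == y)]|
           <= #|[set w : Om | @sac_valid F K D L N w &&
                   ((let '(W, V, R, X) := w in A W V R *m X) == y')]|)%N.
Proof.
move=> Hf y y'.
pose phi (w : Om) : Om := let '(W, V, R, X) := w in (W, V, R, X + pinvmx (A W V R) *m (y' - y)).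
pose psi (w : Om) : Om := let '(W, V, R, X) := w in (W, V, R, X - pinvmx (A W V R) *m (y' - y)).
have phiK : cancel phi psi by case=> [[[W V] R] X] /=; rewrite addrK.
rewrite -(card_imset _ (can_inj phiK)); apply: subset_leq_card.
apply/subsetP => w' /imsetP [w]; rewrite inE => /andP[v e] ->.
move: v e (Hf w); case: w => [[[W V] R] X] /= v /eqP e rf.
rewrite inE; apply/andP; split; first exact: v.
by rewrite /= mulmxDr mulmxA mulmxVp ?rf // mul1mx e addrC subrK.
Qed.

Lemma recover : forall rT : realType,
  cond_entropy rT (@sac_valid F K D L N) (@sac_demand F K D L N)
     (fun w => (sac_answer M w, sac_query M w, sac_W w, sac_V w)) = 0.
Proof.
move=> rT; apply: cond_entropy0.
case=> [[[W1 V1] R1] X1] [[[W2 V2] R2] X2] /= /and3P[_ _ u1] _ [e1 e2 eW eV].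
subst W2 V2.
set G := col_mx (global_coef W1 V1) M in e1 e2 *.
have : G *m X1 = G *m X2.
  have h : forall X : 'M[F]_(K, N), G *m X = invmx R1 *m (R1 *m G *m X).
    by move=> X; rewrite -mulmxA mulKmx.
  rewrite h e1 -e2 -h //.
rewrite /G !mul_col_mx => /(congr1 usubmx).
by rewrite !col_mxKu.
Qed.
End Sac.
Section Priv.
Variables (F : finFieldType) (K D L N : nat) (M : 'M[F]_(K - D, K)).
Local Notation Om := (sac_space F K D L N).

Definition Eset (G0 : 'M[F]_(L + (K - D), K)) (W0 : {set 'I_K}) : {set Om} :=
  [set w : Om | @sac_valid F K D L N w && ((sac_W w == W0) && (sac_query M w == G0))].

Lemma Eset_P G0 W0 W V R X :
  ((W, V, R, X) : Om) \in Eset G0 W0 ->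
  [/\ W = W0, #|W| = D, \rank V = L, R \in unitmx & R *m Ghat M W V = G0].
Proof.
by rewrite inE => /andP[/and3P[/eqP cW /eqP rV Ru] /= /andP[/eqP eW /eqP eG]].
Qed.

Lemma E_le (G0 : 'M[F]_(L + (K - D), K)) (w1 : Om) :
  (D <= K)%N -> is_MDS M -> @sac_valid F K D L N w1 -> sac_query M w1 = G0 ->
  forall W1 W2 : {set 'I_K}, #|W1| = D -> #|W2| = D ->
  (#|Eset G0 W1| <= #|Eset G0 W2|)%N.
Proof.
move=> DK mds; case: w1 => [[[Wa Va] Ra] Xa] /and3P[/eqP cWa /eqP rVa Rau] eG W1 W2 c1 c2.
change (Ra *m Ghat M Wa Va = G0) in eG.
have [Vb1 [Rb1 [rV1 Ru1 e1]]] := exists_sol DK cWa mds rVa Rau eG c1.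
have [Vb2 [Rb2 [rV2 Ru2 e2]]] := exists_sol DK cWa mds rVa Rau eG c2.
have GE2 := G0_facts c2 mds rV2 Ru2 e2.
have rG : \rank G0 = (L + (K - D))%N by rewrite GE2 Ghat_rank.
have MG : (M <= G0)%MS.
  by rewrite GE2; have := submx_refl (Ghat M W2 Vb2); rewrite {2}/Ghat col_mx_sub => /andP[].
have UG2 : (global_coef W2 Vb2 <= G0)%MS.
  by rewrite GE2; have := submx_refl (Ghat M W2 Vb2); rewrite {2}/Ghat col_mx_sub => /andP[].
have f2 : row_free Vb2 by rewrite /row_free rV2.
pose phi (w : Om) : Om := let '(W, V, R, X) := w in
  let V' := V *m pinvmx Vb1 *m Vb2 in (W2, V', G0 *m pinvmx (Ghat M W2 V'), X).
have AV : forall W V R X, ((W, V, R, X) : Om) \in Eset G0 W1 ->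
    V *m pinvmx Vb1 *m Vb1 = V.
  move=> W V R X /Eset_P [-> _ rV Ru e]; apply: mulmxKpV.
  exact: contain c1 mds rV1 Ru1 e1 rV Ru e.
rewrite -(card_in_imset (f := phi)); last first.
  move=> [[[W V] R] X] [[[W' V'] R'] X'] h h' /=.
  have AVh := AV _ _ _ _ h; have AVh' := AV _ _ _ _ h'.
  move: h h' => /Eset_P [eW cW rV Ru e] /Eset_P [eW' cW' rV' Ru' e'].
  case => /(row_free_inj f2) eA _ eX; subst W W' X'.
  have eV : V = V' by rewrite -AVh -AVh' eA.
  subst V'; congr (_, _, _, _).
  apply: (row_free_inj (Ghat_free cW mds rV)); by rewrite e e'.
apply: subset_leq_card; apply/subsetP => w' /imsetP [w wE ->].
move: wE; case: w => [[[W V] R] X] wE; have AVw := AV _ _ _ _ wE.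
move: wE => /Eset_P [eW cW rV Ru e].
set A := V *m pinvmx Vb1.
have rA : \rank A = L.
  apply/eqP; rewrite eqn_leq rank_leq_row /= -{1}rV -{1}AVw; exact: mxrankM_maxl.
have rV' : \rank (A *m Vb2) = L by rewrite mxrankMfree.
have UG : (global_coef W2 (A *m Vb2) <= G0)%MS.
  apply: submx_trans UG2; rewrite !gc_PW -mulmxA; exact: submxMl.
have [Ru' e'] := complete c2 mds rV' UG MG rG.
rewrite /= inE; apply/andP; split; first by rewrite /= c2 rV' !eqxx Ru'.
by rewrite /= eqxx /=; apply/eqP; exact: e'.
Qed.
End Priv.
Lemma valid_nonempty (F : finFieldType) (K D L N : nat) :
  (L <= D)%N -> (D <= K)%N ->
  (0 < #|[set w : sac_space F K D L N | @sac_valid F K D L N w]|)%N.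
Proof.
move=> LD DK.
have : (0 < #|[set A : {set 'I_K} | #|A| == D]|)%N by rewrite card_draws card_ord bin_gt0.
case/card_gt0P => W0; rewrite inE => cW0.
apply/card_gt0P; exists (W0, (pid_mx L : 'M[F]_(L, D)), (1%:M : 'M[F]_(L + (K - D))), (0 : 'M[F]_(K, N))).
by rewrite inE /= cW0 rank_pid_mx // eqxx unitmx1.
Qed.

Unset Implicit Arguments.
Set Strict Implicit.

Theorem lemma6 (rT : realType) (F : finFieldType) (K D L N : nat)
  (M : 'M[F]_(K - D, K)) :
  (1 <= N)%N -> (1 <= L)%N -> (L <= D)%N -> (D <= K)%N ->
  (K <= #|F|)%N -> is_MDS M ->
  let valid := @sac_valid F K D L N in
  (* recoverability: H(Z | A, Q, W, V) = 0 *)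
  [/\ cond_entropy rT valid (@sac_demand F K D L N)
        (fun w => (sac_answer M w, sac_query M w, sac_W w, sac_V w)) = 0,
  (* joint privacy *)
      (forall (G0 : 'M[F]_(L + (K - D), K)),
          0 < Pr rT valid (fun w => sac_query M w == G0) ->
          forall Wt : {set 'I_K}, #|Wt| = D ->
            Pr rT valid (fun w => (sac_W w == Wt) && (sac_query M w == G0))
              / Pr rT valid (fun w => sac_query M w == G0)
            = ('C(K, D)%:R)^-1)
    & (* rate H(Z)/H(A) = L / (K - D + L) *)
      entropy rT valid (@sac_demand F K D L N)
        / entropy rT valid (sac_answer M) = L%:R / (K - D + L)%:R].
Proof.
move=> N1 L1 LD DK qK mds valid.
have n0 := @valid_nonempty F K D L N LD DK.
split.
- exact: recover.
- move=> G0 pos Wt cWt.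
  have [w1 w1in] : exists w1, w1 \in [set w | valid w && (sac_query M w == G0)].
    apply/set0Pn; apply: contraTneq pos => e.
    by rewrite /Pr e cards0 mul0r ltxx.
  move: w1in; rewrite inE => /andP[v1 /eqP q1].
  set c := #|Eset N M G0 Wt|.
  have Ec : forall W : {set 'I_K}, #|W| = D -> #|Eset N M G0 W| = c.
    by move=> W cW; apply/eqP; rewrite eqn_leq !(E_le DK mds v1 q1).
  have tot : #|[set w | valid w && (sac_query M w == G0)]| = ('C(K, D) * c)%N.
    rewrite (card_part (p := @sac_W F K D L N) (Q := fun W => #|W| == D)); last first.
      by case=> [[[W V] R] X] /andP[/and3P[]].
    rewrite (eq_bigr (fun _ => c)); last first.
      move=> W /eqP cW; rewrite -(Ec W cW).
      have h : #|[set w : sac_space F K D L N | valid w && (sac_query M w == G0) && (sac_W w == W)]| = #|Eset N M G0 W|.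
        apply: eq_card => w; rewrite !inE.
        by rewrite -andbA [(sac_W w == W) && _]andbC.
      exact: h.
    rewrite sum_nat_const; congr (_ * _)%N.
    have := card_draws 'I_K D; rewrite card_ord => <-.
    by apply: eq_card => W; rewrite inE.
  have e1 : Pr rT valid (fun w => (sac_W w == Wt) && (sac_query M w == G0)) =
      c%:R / #|[set w | valid w]|%:R by [].
  rewrite e1 /Pr tot.
  have Cc : ('C(K, D) * c)%N != 0%N.
    apply: contraTneq pos => e; by rewrite /Pr tot e mul0r ltxx.
  have nn : (#|[set w | valid w]|%:R : rT) != 0 by rewrite pnatr_eq0 -lt0n.
  have cn : (c%:R : rT) != 0 by move: Cc; rewrite muln_eq0 negb_or pnatr_eq0 => /andP[].
  have Cn : ('C(K, D)%:R : rT) != 0 by move: Cc; rewrite muln_eq0 negb_or pnatr_eq0 => /andP[].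
  rewrite natrM; move: nn cn Cn.
  move: (#|[set w | valid w]|%:R : rT) (c%:R : rT) ('C(K, D)%:R : rT) => a b d ha hb hd.
  by field; rewrite ha hb hd.
- have hZ : entropy rT valid (@sac_demand F K D L N) = log2 (#|'M[F]_(L, N)|%:R).
    apply: entropy_unif => // y y'.
    have := @shift_le F K D L N L (fun W V R => global_coef W V) _ y y'; apply.
    case=> [[[W V] R] X] /and3P[/eqP cW /eqP rV _]; exact: U_free.
  have hY : entropy rT valid (sac_answer M) = log2 (#|'M[F]_(L + (K - D), N)|%:R).
    apply: entropy_unif => // y y'.
    have := @shift_le F K D L N (L + (K - D)) (fun W V R => R *m col_mx (global_coef W V) M) _ y y'; apply.
    case=> [[[W V] R] X] /and3P[/eqP cW /eqP rV Ru].
    rewrite /row_free (eqmxMfull _ (_ : row_full R)) ?row_full_unit //.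
    exact: (Ghat_free cW mds rV).
  have Fpos : (0 < #|F|)%N by apply/card_gt0P; exists 0.
  rewrite hZ hY !card_mx /log2 !natrX !lnXn ?ltr0n //.
  have q1 : (1 < #|F|%:R :> rT) by rewrite ltr1n card_finNzRing_gt1.
  have lq : ln (#|F|%:R : rT) != 0 by rewrite gt_eqF // ln_gt0.
  have l2 : ln (2 : rT) != 0 by rewrite gt_eqF // ln_gt0 // ltr1n.
  have Nn : (N%:R : rT) != 0 by rewrite pnatr_eq0 -lt0n.
  have Kn : ((K - D + L)%N%:R : rT) != 0 by rewrite pnatr_eq0; apply/eqP; lia.
  rewrite -(mulr_natr _ (L * N)%N) -(mulr_natr _ ((L + (K - D)) * N)%N) !natrM (addnC (K - D)%N L) natrD.
  rewrite natrD in Kn.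
  move: lq l2 Nn Kn.
  move: (ln (#|F|%:R : rT)) (ln (2 : rT)) (N%:R : rT) (L%:R : rT) ((K - D)%N%:R : rT) => a b n l k ha hb hn hk.
  by field; rewrite addrC hk ha hb hn.
Qed.
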